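(* Let $p(x)$ be a distribution on $\mathbb{R}^n$, $f_\theta:\mathbb{R}^n\to\mathcal{S}^{d-1}$ an encoder, $\tau>0$ a temperature and $t^->0$. For a query $x$ define $$\pi^-_\theta(x^-\mid x)=\frac{e^{-t^-\|f_\theta(x)-f_\theta(x^-)\|_2^2}\,p(x^-)}{\int e^{-t^-\|f_\theta(x)-f_\theta(x')\|_2^2}\,p(x')\,dx'},$$ the mutual information $$I(X;X^-)=\mathbb{E}_{x\sim p(x)}\mathbb{E}_{x^-\sim\pi^-_\theta(\cdot\mid x)}\Big[\ln\frac{\pi^-_\theta(x^-\mid x)}{p(x^-)}\Big],$$ the contrastive repulsion loss $$\mathcal{L}_{\mathrm{CR}}=\mathbb{E}_{x\sim p(x)}\mathbb{E}_{x^-\sim\pi^-_\theta(\cdot\mid x)}\big[-c(f_\theta(x),f_\theta(x^-))\big]\quad\text{with } c(z_1,z_2)=-z_1^\top z_2/\tau,$$ and the uniformity loss $$\mathcal{L}_{\mathrm{uniform}}=\mathbb{E}_{x\sim p(x)}\Big[\ln\mathbb{E}_{x^-\sim p(x^-)}e^{f_\theta(x^-)^\top f_\theta(x)/\tau}\Big].$$ Then $$\mathcal{L}_{\mathrm{uniform}}+I(X;X^-)\ \geqslant\ \mathcal{L}_{\mathrm{CR}}.$$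
   Context: $\mathcal{L}_{\mathrm{uniform}}$ is the limit, as the number $M$ of negative samples tends to infinity, of the contribution of the negative samples to the standard contrastive (InfoNCE) loss $\mathbb{E}\big[-\ln\frac{e^{f_\theta(x)^\top f_\theta(x^+)/\tau}}{e^{f_\theta(x)^\top f_\theta(x^+)/\tau}+\sum_{i=1}^M e^{f_\theta(x_i^-)^\top f_\theta(x)/\tau}}\big]$ (after subtracting $\ln M$), where negatives $x_i^-$ are drawn i.i.d. from $p$ independently of the query $x$. *)

(* Defs.v *)
From HB Require Import structures.
From mathcomp Require Import all_boot all_order all_algebra.
From mathcomp Require Import all_classical all_reals all_analysis.
Import numFieldTopology.Exports.
Set Implicit Arguments. Unset Strict Implicit. Unset Printing Implicit Defensive.
Import Order.TTheory GRing.Theory Num.Theory.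
Local Open Scope ring_scope.

Definition Rn (R : realType) (n : nat) :=
  g_sigma_algebraType (open : set (set 'M[R]_(1, n))).

Section defs.
Variables (R : realType) (n d : nat).

Definition dotv (u v : 'rV[R]_d) : R := \sum_(i < d) u 0 i * v 0 i.
Definition sqdist (u v : 'rV[R]_d) : R := \sum_(i < d) (u 0 i - v 0 i) ^+ 2.
Definition on_sphere (u : 'rV[R]_d) : Prop := dotv u u = 1.

Definition cost (tau : R) (z1 z2 : 'rV[R]_d) : R := - (dotv z1 z2 / tau).

Variables (P : probability (Rn R n) R) (f : Rn R n -> 'rV[R]_d).

Definition Ep (h : Rn R n -> R) : R := Rintegral P setT h.

Definition Zneg (t : R) (x : Rn R n) : R :=
  Ep (fun x' => expR (- t * sqdist (f x) (f x'))).

(* density of pi^-(. | x) with respect to p, i.e. pi^-(x^- | x) / p(x^-) *)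
Definition pi_ratio (t : R) (x xm : Rn R n) : R :=
  expR (- t * sqdist (f x) (f xm)) / Zneg t x.

(* E_{x^- ~ pi^-(.|x)}[h x^-] = E_{x^- ~ p}[(pi^-/p)(x^-) h x^-] *)
Definition Epi (t : R) (x : Rn R n) (h : Rn R n -> R) : R :=
  Ep (fun xm => pi_ratio t x xm * h xm).

Definition MI (t : R) : R :=
  Ep (fun x => Epi t x (fun xm => ln (pi_ratio t x xm))).

Definition L_CR (tau t : R) : R :=
  Ep (fun x => Epi t x (fun xm => - cost tau (f x) (f xm))).

Definition L_uniform (tau : R) : R :=
  Ep (fun x => ln (Ep (fun xm => expR (dotv (f xm) (f x) / tau)))).

End defs.

(* Main.v *)
Require Import Defs.
From HB Require Import structures.
From mathcomp Require Import all_boot all_order all_algebra.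
From mathcomp Require Import all_classical all_reals all_analysis.
From mathcomp Require Import measurable_realfun.
From mathcomp Require Import ring lra.
Import numFieldTopology.Exports.
Import Order.TTheory GRing.Theory Num.Theory.
Local Open Scope ring_scope.

Section Good.
Variable R : realType.

Definition good {dd} {U : measurableType dd} (g : U -> R) :=
  measurable_fun setT g /\ exists M : R, forall z, `|g z| <= M.

Context {dd} {U : measurableType dd}.
Implicit Types g h : U -> R.

Lemma good_ext g h : good g -> (forall z, g z = h z) -> good h.
Proof.
move=> [mg [M hM]] gh; have -> : h = g by apply/funext => z; rewrite gh.
by split => //; exists M.
Qed.

Lemma good_cst c : good (fun _ : U => c).
Proof. by split; [exact: measurable_cst | exists `|c|]. Qed.

Lemma good_add g h : good g -> good h -> good (fun z => g z + h z).
Proof.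
move=> [mg [M hM]] [mh [N hN]]; split; first exact: measurable_funD.
by exists (M + N) => z; rewrite (le_trans (ler_normD _ _))// lerD.
Qed.

Lemma good_opp g : good g -> good (fun z => - g z).
Proof.
move=> [mg [M hM]]; split; first exact: measurable_funN.
by exists M => z; rewrite normrN.
Qed.

Lemma good_mul g h : good g -> good h -> good (fun z => g z * h z).
Proof.
move=> [mg [M hM]] [mh [N hN]]; split; first exact: measurable_funM.
exists (M * N) => z; rewrite normrM ler_pM//.
Qed.

Lemma good_exp g : good g -> good (fun z => expR (g z)).
Proof.
move=> [mg [M hM]]; split; first exact: measurableT_comp mg.
exists (expR M) => z; rewrite ger0_norm ?expR_ge0// ler_expR.
exact: le_trans (ler_norm _) (hM z).
Qed.

End Good.
Arguments good {R dd U}.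
Arguments good_ext {R dd U g h}.
Arguments good_add {R dd U g h}.
Arguments good_mul {R dd U g h}.
Arguments good_opp {R dd U g}.
Arguments good_exp {R dd U g}.
Arguments good_cst {R dd U}.

Section Prob.
Variables (R : realType) (dd : measure_display) (T : measurableType dd)
  (P : probability T R).
Local Notation E h := (Rintegral P setT h).

Lemma good_int (h : T -> R) : good h -> P.-integrable setT (EFin \o h).
Proof.
move=> [mh [M hM]].
apply: (@le_integrable _ _ _ P setT measurableT _ (EFin \o cst M)).
- exact/measurable_EFinP.
- move=> x _ /=; rewrite lee_fin (le_trans (hM x))//.
  exact: ler_norm.
- exact: finite_measure_integrable_cst.
Qed.

Lemma E_cst c : E (fun _ => c) = c.
Proof.
rewrite Rintegral_cst//; suff -> : fine (P setT) = 1 by rewrite mulr1.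
exact: (congr1 fine (probability_setT P)).
Qed.

Lemma E_le (h1 h2 : T -> R) : good h1 -> good h2 ->
  (forall x, h1 x <= h2 x) -> E h1 <= E h2.
Proof. by move=> g1 g2 h12; apply: le_Rintegral => //; apply: good_int. Qed.

Lemma E_lb (h : T -> R) c : good h -> (forall x, c <= h x) -> c <= E h.
Proof. by move=> gh hc; rewrite -[X in X <= _]E_cst; apply: E_le => //; exact: good_cst. Qed.

Lemma E_ub (h : T -> R) c : good h -> (forall x, h x <= c) -> E h <= c.
Proof. by move=> gh hc; rewrite -[X in _ <= X]E_cst; apply: E_le => //; exact: good_cst. Qed.

Lemma E_add (h1 h2 : T -> R) : good h1 -> good h2 ->
  E (fun x => h1 x + h2 x) = E h1 + E h2.
Proof. by move=> g1 g2; apply: RintegralD => //; apply: good_int. Qed.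

Lemma E_mulr (h : T -> R) c : good h -> E (fun x => h x * c) = E h * c.
Proof. by move=> g; apply: RintegralZr => //; apply: good_int. Qed.

Lemma E_opp (h : T -> R) : good h -> E (fun x => - h x) = - E h.
Proof.
move=> g; rewrite -[RHS]mulrN1 -E_mulr//.
by apply: eq_Rintegral => x _; rewrite mulrN1.
Qed.

End Prob.
Arguments E_le {R dd T} P {h1 h2}.
Arguments E_add {R dd T} P {h1 h2}.
Arguments E_mulr {R dd T} P {h} c.
Arguments E_opp {R dd T} P {h}.

Section Param.
Variables (R : realType) (dd : measure_display) (T : measurableType dd)
  (P : probability T R).
Local Notation E h := (Rintegral P setT h).

Lemma good_sec (g : T * T -> R) x : good g -> good (fun y => g (x, y)).
Proof.
move=> [mg [M hM]]; split; last by exists M.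
exact: measurable_fun_pair2.
Qed.

Lemma good_fst (h : T -> R) : good h -> good (fun z : T * T => h z.1).
Proof.
move=> [mh [M hM]]; split; last by exists M.
exact: measurableT_comp mh measurable_fst.
Qed.

Lemma good_snd (h : T -> R) : good h -> good (fun z : T * T => h z.2).
Proof.
move=> [mh [M hM]]; split; last by exists M.
exact: measurableT_comp mh measurable_snd.
Qed.

Lemma good_E (g : T * T -> R) : good g -> good (fun x => E (fun y => g (x, y))).
Proof.
move=> gg; have [mg [M hM]] := gg.
split; last first.
  exists M => x; rewrite ler_norml; apply/andP; split.
  - apply: E_lb; first exact: good_sec.
    by move=> y; have := hM (x, y); rewrite ler_norml => /andP[].
  - apply: E_ub; first exact: good_sec.
    by move=> y; have := hM (x, y); rewrite ler_norml => /andP[].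
have eq : forall x, E (fun y => g (x, y)) =
    fine (fubini_F P (fun z => (g z + M)%:E) x) - M.
  move=> x; rewrite -[X in _ - X](@E_cst _ _ _ P M) -RintegralB//.
  - by apply: eq_Rintegral => y _; rewrite addrK.
  - apply: good_int; apply: good_add; [exact: good_sec|exact: good_cst].
  - apply: good_int; exact: good_cst.
rewrite (_ : (fun x => _) = (fun x => fine (fubini_F P (fun z => (g z + M)%:E) x) - M)); last first.
  by apply/funext => x; rewrite eq.
apply: measurable_funB; last exact: measurable_cst.
apply: measurableT_comp => //.
apply: measurable_fun_fubini_tonelli_F.
- apply/measurable_EFinP; apply: measurable_funD => //; exact: measurable_cst.
- move=> z; rewrite lee_fin -lerBlDr sub0r.
  by have := hM z; rewrite ler_norml => /andP[].
Qed.

End Param.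
Arguments good_sec {R dd T g} x.
Arguments good_fst {R dd T h}.
Arguments good_snd {R dd T h}.
Arguments good_E {R dd T} P {g}.
Arguments good_int {R dd T} P {h}.

Section Main.
Variables (R : realType) (n d : nat) (P : probability (Rn R n) R)
  (f : Rn R n -> 'rV[R]_d) (tau tm : R).
Hypothesis mf : forall i : 'I_d, measurable_fun setT (fun x : Rn R n => f x 0 i).
Hypothesis sph : forall x, on_sphere (f x).
Hypothesis tau0 : 0 < tau.
Hypothesis tm0 : 0 < tm.
Local Notation T := (Rn R n).
Local Notation E h := (Rintegral P setT h).

Lemma sqdistE (u v : 'rV[R]_d) :
  sqdist u v = dotv u u + dotv v v - 2 * dotv u v.
Proof.
rewrite /sqdist /dotv mulr_sumr -big_split -sumrB /=.
by apply: eq_bigr => i _; rewrite sqrrB; ring.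
Qed.

Lemma sumsqE (u v : 'rV[R]_d) :
  \sum_(i < d) (u 0 i + v 0 i) ^+ 2 = dotv u u + dotv v v + 2 * dotv u v.
Proof.
rewrite /dotv mulr_sumr -!big_split /=.
by apply: eq_bigr => i _; rewrite sqrrD; ring.
Qed.

Lemma dot_bnd x y : `|dotv (f x) (f y)| <= 1.
Proof.
have hx := sph x; have hy := sph y; rewrite /on_sphere in hx hy.
rewrite ler_norml; apply/andP; split.
- have : 0 <= \sum_(i < d) (f x 0 i + f y 0 i) ^+ 2.
    by apply: sumr_ge0 => i _; exact: sqr_ge0.
  rewrite sumsqE hx hy => h; lra.
- have : 0 <= sqdist (f x) (f y).
    by apply: sumr_ge0 => i _; exact: sqr_ge0.
  rewrite sqdistE hx hy => h; lra.
Qed.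

Lemma sqd_sph x y : sqdist (f x) (f y) = 2 - 2 * dotv (f x) (f y).
Proof. by rewrite sqdistE (sph x) (sph y). Qed.

Lemma mdot : measurable_fun setT (fun z : T * T => dotv (f z.1) (f z.2)).
Proof.
rewrite /dotv; apply: measurable_sum => i; apply: measurable_funM.
- exact: measurableT_comp (mf i) measurable_fst.
- exact: measurableT_comp (mf i) measurable_snd.
Qed.

Lemma good_dot : good (fun z : T * T => dotv (f z.1) (f z.2)).
Proof. by split; [exact: mdot | exists 1 => z; exact: dot_bnd]. Qed.

Lemma good_dot' : good (fun z : T * T => dotv (f z.2) (f z.1)).
Proof.
apply: (good_ext good_dot) => z; rewrite /dotv.
by apply: eq_bigr => i _; rewrite mulrC.
Qed.

Lemma good_sqd : good (fun z : T * T => sqdist (f z.1) (f z.2)).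
Proof.
apply: (good_ext (good_add (good_cst 2) (good_opp (good_mul (good_cst 2) good_dot)))).
by move=> z; rewrite sqd_sph.
Qed.

Definition ee (z : T * T) := expR (- tm * sqdist (f z.1) (f z.2)).

Lemma good_ee : good ee.
Proof. exact: good_exp (good_mul (good_cst _) good_sqd). Qed.

Lemma ee_bnd z : expR (- (4 * tm)) <= ee z <= 1.
Proof.
have := dot_bnd z.1 z.2; rewrite ler_norml => /andP[h1 h2].
have t0 := tm0.
have k1 : 0 <= tm * (dotv (f z.1) (f z.2) + 1) by (apply: mulr_ge0; [exact: ltW | lra]).
have k2 : 0 <= tm * (1 - dotv (f z.1) (f z.2)) by (apply: mulr_ge0; [exact: ltW | lra]).
rewrite /ee sqd_sph; apply/andP; split.
- rewrite ler_expR -subr_ge0.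
  set D := dotv _ _ in k1 k2 *.
  have -> : - tm * (2 - 2 * D) - - (4 * tm) = 2 * (tm * (D + 1)) by ring.
  by rewrite mulr_ge0.
- rewrite -[X in _ <= X]expR0 ler_expR -subr_ge0.
  set D := dotv _ _ in k1 k2 *.
  have -> : 0 - - tm * (2 - 2 * D) = 2 * (tm * (1 - D)) by ring.
  by rewrite mulr_ge0.
Qed.

Definition ZZ (x : T) := E (fun y => ee (x, y)).

Lemma good_ZZ : good ZZ.
Proof. exact (good_E P good_ee). Qed.

Lemma ZZ_bnd x : expR (- (4 * tm)) <= ZZ x <= 1.
Proof.
apply/andP; split.
- apply: E_lb; first exact: good_sec _ good_ee.
  by move=> y; have /andP[] := ee_bnd (x, y).
- apply: E_ub; first exact: good_sec _ good_ee.
  by move=> y; have /andP[] := ee_bnd (x, y).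
Qed.

Lemma ZZ_gt0 x : 0 < ZZ x.
Proof. have /andP[h _] := ZZ_bnd x; exact: lt_le_trans (expR_gt0 _) h. Qed.

Lemma good_lnZZ : good (fun x => ln (ZZ x)).
Proof.
have [mZ _] := good_ZZ; split; first exact: measurableT_comp (@measurable_ln R) mZ.
exists (4 * tm) => x; have /andP[h1 h2] := ZZ_bnd x.
rewrite ler_norml; apply/andP; split.
- rewrite -[X in X <= _](expRK) ler_ln ?posrE ?expR_gt0 ?ZZ_gt0//.
- by apply: le_trans (ln_le0 h2) _; rewrite mulr_ge0// ltW.
Qed.


Lemma qE x y : pi_ratio P f tm x y = expR (- tm * sqdist (f x) (f y) - ln (ZZ x)).
Proof.
rewrite expRB lnK ?posrE ?ZZ_gt0//.
Qed.

Lemma good_q : good (fun z : T * T => pi_ratio P f tm z.1 z.2).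
Proof.
apply: (good_ext (good_exp (good_add (good_mul (good_cst (- tm)) good_sqd)
   (good_opp (good_fst good_lnZZ))))).
by move=> z; rewrite qE.
Qed.

Lemma lnqE x y : ln (pi_ratio P f tm x y) = - tm * sqdist (f x) (f y) - ln (ZZ x).
Proof. by rewrite qE expRK. Qed.

Lemma good_lq : good (fun z : T * T => ln (pi_ratio P f tm z.1 z.2)).
Proof.
apply: (good_ext (good_add (good_mul (good_cst (- tm)) good_sqd)
   (good_opp (good_fst good_lnZZ)))).
by move=> z; rewrite lnqE.
Qed.

Lemma E_q x : E (fun y => pi_ratio P f tm x y) = 1.
Proof.
rewrite /pi_ratio.
rewrite (@E_mulr _ _ _ P (fun y => ee (x, y))); last exact: good_sec _ good_ee.
by rewrite divff // gt_eqF // ZZ_gt0.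
Qed.

Definition WW (x : T) := E (fun y => expR (dotv (f y) (f x) / tau)).

Lemma good_eG : good (fun z : T * T => expR (dotv (f z.2) (f z.1) / tau)).
Proof. exact: good_exp (good_mul good_dot' (good_cst _)). Qed.

Lemma good_WW : good WW.
Proof. exact (good_E P good_eG). Qed.

Lemma WW_bnd x : expR (- tau^-1) <= WW x <= expR tau^-1.
Proof.
have ti : 0 < tau^-1 by rewrite invr_gt0.
apply/andP; split.
- apply: E_lb; first exact: good_sec _ good_eG.
  move=> y /=; rewrite ler_expR.
  have := dot_bnd y x; rewrite ler_norml => /andP[h1 _].
  by rewrite -mulN1r ler_pM2r.
- apply: E_ub; first exact: good_sec _ good_eG.
  move=> y /=; rewrite ler_expR.
  have := dot_bnd y x; rewrite ler_norml => /andP[_ h2].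
  by rewrite -[X in _ <= X]mul1r ler_pM2r.
Qed.

Lemma good_lnWW : good (fun x => ln (WW x)).
Proof.
have [mW _] := good_WW; split; first exact: measurableT_comp (@measurable_ln R) mW.
have Wp x : 0 < WW x.
  by have /andP[h _] := WW_bnd x; exact: lt_le_trans (expR_gt0 _) h.
exists tau^-1 => x; have /andP[h1 h2] := WW_bnd x.
rewrite ler_norml; apply/andP; split.
- by rewrite -[X in X <= _](expRK) ler_ln ?posrE ?expR_gt0.
- by rewrite -[X in _ <= X](expRK) ler_ln ?posrE ?expR_gt0.
Qed.

Lemma dotC (u v : 'rV[R]_d) : dotv u v = dotv v u.
Proof. by apply: eq_bigr => i _; rewrite mulrC. Qed.

Lemma point x :
  E (fun y => pi_ratio P f tm x y * - cost tau (f x) (f y)) <=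
  ln (WW x) + E (fun y => pi_ratio P f tm x y * ln (pi_ratio P f tm x y)).
Proof.
pose q y := pi_ratio P f tm x y.
pose G y := dotv (f x) (f y) / tau.
pose W := WW x.
have gq : good (fun y => q y) := good_sec x good_q.
have gG : good (fun y => G y) := good_sec x (good_mul good_dot (good_cst tau^-1)).
have glq : good (fun y => ln (q y)) := good_sec x good_lq.
have geG : good (fun y => expR (G y)) := good_exp gG.
have Wp : 0 < W.
  by have /andP[h _] := WW_bnd x; exact: lt_le_trans (expR_gt0 _) h.
have qp y : 0 < q y by rewrite /q qE expR_gt0.
have pt y : q y * G y + - (q y * ln (q y)) + - (q y * ln W) <=
    expR (G y) * W^-1 + - q y.
  pose v := G y - ln (q y) - ln W.
  have h1 := expR_ge1Dx v.
  have h2 : q y * (1 + v) <= q y * expR v by rewrite ler_pM2l.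
  have e1 : q y * expR v = expR (G y) * W^-1.
    rewrite /v !expRB lnK ?posrE // lnK ?posrE //.
    by field; apply/andP; split; rewrite gt_eqF.
  have e2 : q y * (1 + v) = q y + (q y * G y - q y * ln (q y) - q y * ln W).
    by rewrite /v; ring.
  lra.
have gL1 : good (fun y => q y * G y + - (q y * ln (q y))).
  exact: good_add (good_mul gq gG) (good_opp (good_mul gq glq)).
have gL2 : good (fun y => - (q y * ln W)).
  exact: good_opp (good_mul gq (good_cst _)).
have gR1 : good (fun y => expR (G y) * W^-1) := good_mul geG (good_cst _).
have gR2 : good (fun y => - q y) := good_opp gq.
have := E_le P (good_add gL1 gL2) (good_add gR1 gR2) pt.
rewrite (E_add P gL1 gL2) (E_add P gR1 gR2) (E_opp P gq) (E_mulr P _ geG).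
rewrite (E_add P (good_mul gq gG) (good_opp (good_mul gq glq))).
rewrite (E_opp P (good_mul gq (good_cst (ln W)))) (E_opp P (good_mul gq glq)) (E_mulr P _ gq) E_q.
have -> : E (fun y => expR (G y)) = W.
  by apply: eq_Rintegral => y _; rewrite /G dotC.
rewrite divff ?gt_eqF // mul1r.
have -> : E (fun y => pi_ratio P f tm x y * - cost tau (f x) (f y)) =
  E (fun y => q y * G y).
  by apply: eq_Rintegral => y _; rewrite /cost opprK.
rewrite -/W; lra.
Qed.

Lemma final : L_CR P f tau tm <= L_uniform P f tau + MI P f tm.
Proof.
rewrite /L_CR /L_uniform /MI /Epi /Ep.
have gA : good (fun x => ln (WW x)) := good_lnWW.
have gB : good (fun x => E (fun y => pi_ratio P f tm x y * ln (pi_ratio P f tm x y))).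
  exact (good_E P (good_mul good_q good_lq)).
have gC : good (fun x => E (fun y => pi_ratio P f tm x y * - cost tau (f x) (f y))).
  apply: (good_E P (g := fun z => pi_ratio P f tm z.1 z.2 * - cost tau (f z.1) (f z.2))).
  apply: (good_ext (good_mul good_q (good_mul good_dot (good_cst tau^-1)))).
  by move=> z; rewrite /cost opprK.
rewrite -(E_add P gA gB).
apply: (E_le P) => //; first exact: good_add gA gB.
exact: point.
Qed.

End Main.

Theorem lemma3 (R : realType) (n d : nat) (P : probability (Rn R n) R)
  (f : Rn R n -> 'rV[R]_d) (tau tm : R) :
  (forall i : 'I_d, measurable_fun setT (fun x : Rn R n => f x 0 i)) ->
  (forall x, on_sphere (f x)) ->
  0 < tau -> 0 < tm ->
  L_uniform P f tau + MI P f tm >= L_CR P f tau tm.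
Proof.
move=> mf sph tau0 tm0.
by apply: final.
Qed.
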